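(* Let $n\ge3$ and $q=\frac{2n}{n-2}$. Let $u_0>0$. There exists a solution $U$ on $[0,\infty)$ of $$-U''=U^{-q-1}-U^{q-1}$$ satisfying $U(0)=u_0$ and $\lim_{x\to\infty}U(x)=1$, with $U$ converging rapidly to $1$ at infinity. Moreover $U$ satisfies $$U'=\sqrt{\tfrac{2}{q}}\left[U^{-q/2}-U^{q/2}\right],$$ and $U'(x)\to0$ rapidly as $x\to\infty$.
   Context: A function $f$ converges rapidly to $L$ at infinity if $\lim_{x\to\infty}|f(x)-L|\,x^m=0$ for every $m\in\mathbb{R}$. *)

(* Defs.v *)
From Stdlib Require Import Reals.
From Coquelicot Require Import Coquelicot.
Open Scope R_scope.

(* f converges rapidly to L at infinity:
   lim_{x -> oo} |f x - L| * x^m = 0 for every real m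
   (x^m := Rpower x m, well defined for x > 0, i.e. near +oo). *)
Definition rapid_conv (f : R -> R) (L : R) : Prop :=
  forall m : R, is_lim (fun x => Rabs (f x - L) * Rpower x m) p_infty 0.

(* Main.v *)
Require Import Defs.
From Stdlib Require Import Reals Lra Lia Psatz ZArith Ranalysis5 ClassicalEpsilon.
From Coquelicot Require Import Coquelicot.
Open Scope R_scope.

Lemma is_derive_eq (f : R -> R) x l l' : is_derive f x l -> l = l' -> is_derive f x l'.
Proof. intros H ->; exact H. Qed.

Lemma exp_INR_mult (n : nat) y : exp (INR n * y) = exp y ^ n.
Proof.
  induction n as [|n IH].
  - simpl. rewrite Rmult_0_l, exp_0; reflexivity.
  - rewrite S_INR, Rmult_plus_distr_r, Rmult_1_l, exp_plus, IH. simpl. ring.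
Qed.

Lemma nat_above (m : R) : exists N : nat, m <= INR N.
Proof.
  destruct (Rle_lt_dec m 0) as [H|H].
  - exists 0%nat; simpl; lra.
  - exists (Z.to_nat (up m)).
    destruct (archimed m) as [H1 H2].
    rewrite INR_IZR_INZ, Z2Nat.id; [lra|].
    apply le_IZR. lra.
Qed.

Lemma key_decay (k m eps : R) : 0 < k -> 0 < eps ->
  exists M, 0 < M /\ forall x, M < x -> exp (- k * x) * Rpower x m < eps.
Proof.
  intros Hk He.
  destruct (nat_above m) as [N HN].
  set (r := (INR N + 1) / k).
  assert (Hr : 0 < r) by (unfold r; apply Rdiv_lt_0_compat; [pose proof (pos_INR N); lra | lra]).
  set (A := r ^ N * r).
  assert (HA : 0 < A) by (unfold A; apply Rmult_lt_0_compat; [apply pow_lt|]; lra).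
  exists (Rmax 1 (A / eps)). split. { pose proof (Rmax_l 1 (A/eps)); lra. }
  intros x Hx.
  pose proof (Rmax_l 1 (A/eps)) as H1; pose proof (Rmax_r 1 (A/eps)) as H2.
  assert (Hx0 : 0 < x) by lra.
  assert (HP : Rpower x m <= x ^ N).
  { rewrite <- Rpower_pow by lra. apply Rle_Rpower; lra. }
  set (y := x / r).
  assert (Hy : 0 < y) by (unfold y; apply Rdiv_lt_0_compat; lra).
  assert (Hxy : x = y * r) by (unfold y; field; lra).
  assert (Hkx : k * x = INR (S N) * y).
  { rewrite S_INR. unfold y, r. field. pose proof (pos_INR N). repeat split; intro; lra. }
  assert (Hey : y < exp y) by (pose proof (exp_ineq1_le y); lra).
  assert (HE : y ^ N * y <= exp (k * x)).
  { rewrite Hkx, exp_INR_mult. simpl. rewrite Rmult_comm.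
    apply Rmult_le_compat; try lra. apply pow_le; lra.
    apply pow_incr; split; lra. }
  assert (HyN : 0 < y ^ N) by (apply pow_lt; lra).
  rewrite Ropp_mult_distr_l_reverse, exp_Ropp.
  apply Rle_lt_trans with (/ exp (k*x) * x ^ N).
  { apply Rmult_le_compat_l; [left; apply Rinv_0_lt_compat, exp_pos | exact HP]. }
  apply Rle_lt_trans with (/ (y ^ N * y) * x ^ N).
  { apply Rmult_le_compat_r; [apply pow_le; lra|].
    apply Rinv_le_contravar; [apply Rmult_lt_0_compat; lra | exact HE]. }
  rewrite Hxy, Rpow_mult_distr.
  replace (/ (y ^ N * y) * (y ^ N * r ^ N)) with (A / (y * r)) by (unfold A; field; lra).
  rewrite <- Hxy.
  apply (Rmult_lt_reg_r x); [lra|]. unfold Rdiv. rewrite Rmult_assoc, Rinv_l, Rmult_1_r by lra.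
  apply (Rmult_lt_reg_l (/ eps)). apply Rinv_0_lt_compat; lra.
  rewrite <- Rmult_assoc, Rinv_l, Rmult_1_l by lra.
  unfold Rdiv in H2. lra.
Qed.

Lemma exp_decay_lim (f : R -> R) (L C k : R) : 0 < k ->
  (forall x, 0 <= x -> Rabs (f x - L) <= C * exp (- k * x)) ->
  is_lim f p_infty L /\ rapid_conv f L.
Proof.
  intros Hk Hb.
  assert (Hg : forall m, is_lim (fun x => Rabs (f x - L) * Rpower x m) p_infty 0).
  { intros m. apply is_lim_spec. intros eps. simpl.
    set (C' := Rabs C + 1).
    assert (HC : 0 < C') by (unfold C'; pose proof (Rabs_pos C); lra).
    destruct (key_decay k m (eps / C') Hk) as [M [HM HMx]].
    { apply Rdiv_lt_0_compat; [apply cond_pos|lra]. }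
    exists M. intros x Hx.
    rewrite Rminus_0_r.
    assert (Hp : 0 < Rpower x m) by (unfold Rpower; apply exp_pos).
    rewrite Rabs_pos_eq by (apply Rmult_le_pos; [apply Rabs_pos|lra]).
    specialize (HMx x Hx). specialize (Hb x ltac:(lra)).
    assert (Hb' : Rabs (f x - L) <= C' * exp (- k * x)).
    { apply Rle_trans with (1 := Hb). apply Rmult_le_compat_r; [left; apply exp_pos|].
      unfold C'; pose proof (Rle_abs C); lra. }
    apply Rle_lt_trans with (C' * (exp (- k * x) * Rpower x m)).
    { rewrite <- Rmult_assoc. apply Rmult_le_compat_r; lra. }
    apply (Rmult_lt_compat_l C') in HMx; [|lra].
    replace (C' * (eps / C')) with (pos eps) in HMx by (field; lra). exact HMx. }
  split; [|exact Hg].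
  apply is_lim_spec. intros eps. simpl.
  specialize (Hg 0). apply is_lim_spec in Hg. destruct (Hg eps) as [M HM].
  exists (Rmax M 0). intros x Hx. specialize (HM x ltac:(pose proof (Rmax_l M 0); lra)).
  unfold Rpower in HM. rewrite Rmult_0_l, exp_0, Rmult_1_r, Rminus_0_r, Rabs_Rabsolu in HM. exact HM.
Qed.

Definition hf (al be c t : R) := c * (exp (- al * t) - exp (be * t)).

Lemma hf_lower al be c t : 0 < al -> 0 <= be -> 0 < c -> t <= 0 -> c * al * (- t) <= hf al be c t.
Proof.
  intros Ha Hb Hc Ht. unfold hf.
  pose proof (exp_ineq1_le (- al * t)).
  assert (exp (be * t) <= 1).
  { rewrite <- exp_0. destruct (Req_dec (be * t) 0) as [E|E]; [rewrite E; lra|].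
    left; apply exp_increasing. nra. }
  nra.
Qed.

Lemma hf_upper al be c T t : 0 < al -> 0 <= be -> 0 < c -> T <= t -> t <= 0 ->
  hf al be c t <= c * (al * exp (- al * T) + be) * (- t).
Proof.
  intros Ha Hb Hc HT Ht. unfold hf.
  set (y := - al * t).
  assert (Hy : 0 <= y) by (unfold y; nra).
  pose proof (exp_ineq1_le (- y)) as E1.
  assert (E2 : exp (- y) * exp y = 1) by (rewrite <- exp_plus; replace (- y + y) with 0 by ring; apply exp_0).
  assert (E3 : exp y <= exp (- al * T)).
  { destruct (Req_dec y (- al * T)) as [E|E]; [rewrite E; lra|]. left; apply exp_increasing. unfold y in *. nra. }
  assert (E4 : exp y - 1 <= y * exp y) by (pose proof (exp_pos y); nra).
  pose proof (exp_ineq1_le (be * t)) as E5.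
  assert (E6 : exp y - 1 <= al * exp (- al * T) * (- t)).
  { apply Rle_trans with (1 := E4). unfold y. replace (- al * t) with (al * (-t)) by ring.
    replace (al * (- t) * exp (al * (- t))) with ((al * (-t)) * exp (al * (- t))) by ring.
    replace (al * exp (- al * T) * - t) with ((al * (-t)) * exp (- al * T)) by ring.
    apply Rmult_le_compat_l; [nra|]. replace (al * (- t)) with y by (unfold y; ring). exact E3. }
  apply Rmult_le_compat_l with (r := c) in E6; [|lra].
  nra.
Qed.

Lemma hf_pos al be c t : 0 < al -> 0 <= be -> 0 < c -> t < 0 -> 0 < hf al be c t.
Proof. intros. pose proof (hf_lower al be c t). assert (0 < c * al * - t) by (apply Rmult_lt_0_compat; nra). lra. Qed.

Lemma hf_derive al be c t : is_derive (hf al be c) t (c * (- al * exp (- al * t) - be * exp (be * t))).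
Proof. unfold hf. auto_derive; [exact I|]. ring. Qed.

Lemma hf_cont al be c t : continuous (hf al be c) t.
Proof. apply (ex_derive_continuous (hf al be c)). eexists. apply hf_derive. Qed.

Lemma ghf_cont al be c t : 0 < al -> 0 <= be -> 0 < c -> t < 0 -> continuous (fun s => / hf al be c s) t.
Proof.
  intros. apply (ex_derive_continuous (fun s => / hf al be c s)). eexists. apply is_derive_inv. apply hf_derive.
  pose proof (hf_pos al be c t); lra.
Qed.

Lemma ode_neg al be c s0 : 0 < al -> 0 <= be -> 0 < c -> s0 < 0 ->
  exists phi : R -> R, phi 0 = s0 /\
    (forall x, 0 <= x -> is_derive phi x (hf al be c (phi x))) /\
    (forall x, 0 <= x -> s0 <= phi x < 0).
Proof.
  intros Hal Hbe Hc Hs0.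
  set (h := hf al be c). set (g := fun t => / h t). set (G := fun x => RInt g s0 x).
  set (T := 2 * s0). set (K := c * (al * exp (- al * T) + be)).
  assert (HK : 0 < K).
  { unfold K. apply Rmult_lt_0_compat; [lra|]. pose proof (exp_pos (- al * T)). nra. }
  assert (Hhpos : forall t, t < 0 -> 0 < h t) by (intros; apply hf_pos; lra).
  assert (Hder : forall x, x < 0 -> is_derive G x (g x)).
  { intros x Hx. apply (is_derive_RInt g G s0 x).
    - assert (He : 0 < - x / 2) by lra.
      exists (mkposreal _ He). intros y Hy.
      unfold ball in Hy; simpl in Hy; unfold AbsRing_ball, abs, minus, plus, opp in Hy; simpl in Hy.
      unfold G. apply (RInt_correct g s0 y). apply (ex_RInt_continuous g).
      intros z Hz. apply ghf_cont; try lra.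
      pose proof (Rmax_lub_lt s0 y 0 Hs0). apply Rabs_def2 in Hy. lra.
    - apply ghf_cont; lra. }
  assert (Hcont : forall x, x < 0 -> continuity_pt G x).
  { intros x Hx. apply continuity_pt_filterlim.
    apply (ex_derive_continuous G). eexists; apply Hder; exact Hx. }
  assert (Hincr : forall x y, x < y -> y < 0 -> G x < G y).
  { intros x y Hxy Hy.
    destruct (MVT_gen G x y g) as [xi [Hxi Heq]].
    - intros z Hz. rewrite Rmin_left, Rmax_right in Hz by lra. apply Hder; lra.
    - intros z Hz. rewrite Rmin_left, Rmax_right in Hz by lra. apply Hcont; lra.
    - rewrite Rmin_left, Rmax_right in Hxi by lra.
      assert (0 < g xi) by (apply Rinv_0_lt_compat, Hhpos; lra).
      assert (0 < g xi * (y - x)) by (apply Rmult_lt_0_compat; lra). lra. }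
  assert (HG0 : G s0 = 0) by (unfold G; rewrite RInt_point; reflexivity).
  assert (Hdiv : forall X, 0 <= X -> exists s, s0 <= s < 0 /\ X <= G s).
  { intros X HX.
    set (s1 := s0 * exp (- K * X)).
    assert (Hex1 : exp (- K * X) <= 1).
    { rewrite <- exp_0. destruct (Req_dec (- K * X) 0) as [E|E]; [rewrite E; lra|].
      left; apply exp_increasing. nra. }
    pose proof (exp_pos (- K * X)).
    assert (Hs1 : s0 <= s1 < 0) by (unfold s1; split; nra).
    exists s1. split; [exact Hs1|].
    set (D := fun x => G x + ln (- x) / K).
    set (dD := fun x => g x + / x / K).
    assert (HdD : forall x, x < 0 -> is_derive D x (dD x)).
    { intros x Hx. unfold D, dD. apply is_derive_eq with (plus (g x) (/ x / K)); [|reflexivity].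
      apply (is_derive_plus G (fun x => ln (- x) / K)); [apply Hder; exact Hx|].
      auto_derive; [lra|]. field. lra. }
    destruct (MVT_gen D s0 s1 dD) as [xi [Hxi Heq]].
    - intros z Hz. rewrite Rmin_left, Rmax_right in Hz by lra. apply HdD; lra.
    - intros z Hz. rewrite Rmin_left, Rmax_right in Hz by lra.
      apply continuity_pt_filterlim. apply (ex_derive_continuous D). eexists; apply HdD; lra.
    - rewrite Rmin_left, Rmax_right in Hxi by lra.
      assert (HdDp : 0 <= dD xi).
      { unfold dD, g.
        assert (H1 : h xi <= K * (- xi)) by (apply hf_upper; unfold T; lra).
        assert (H2 : 0 < h xi) by (apply Hhpos; lra).
        assert (H3 : / (K * (- xi)) <= / h xi) by (apply Rinv_le_contravar; lra).
        replace (/ xi / K) with (- / (K * (- xi))) by (field; lra). lra. }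
      assert (HD : D s0 <= D s1) by nra.
      unfold D in HD. rewrite HG0 in HD.
      assert (Hl : ln (- s1) = ln (- s0) + - K * X).
      { unfold s1. replace (- (s0 * exp (- K * X))) with ((- s0) * exp (- K * X)) by ring.
        rewrite ln_mult by lra. rewrite ln_exp. reflexivity. }
      rewrite Hl in HD.
      assert (E : (ln (- s0) + - K * X) / K = ln (- s0) / K - X) by (field; lra).
      rewrite E in HD. lra. }
  assert (HGT : G T < 0) by (rewrite <- HG0; apply Hincr; unfold T; lra).
  assert (Hex : forall y, exists s, G T < y -> T <= s < 0 /\ G s = y).
  { intros y. destruct (Rle_lt_dec y (G T)) as [Hy|Hy].
    - exists 0. intro; lra.
    - destruct (Hdiv (Rmax y 0) (Rmax_r y 0)) as [s1 [Hs1 Hs1']].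
      destruct (f_interv_is_interv G T s1 y) as [s [Hs Hs']].
      + unfold T; lra.
      + split; [lra|]. pose proof (Rmax_l y 0); lra.
      + intros z Hz. apply Hcont; lra.
      + exists s. intros _. split; [lra|exact Hs']. }
  set (phi := fun y => proj1_sig (constructive_indefinite_description _ (Hex y))).
  assert (Hphi : forall y, G T < y -> T <= phi y < 0 /\ G (phi y) = y).
  { intros y Hy. unfold phi. destruct (constructive_indefinite_description _ (Hex y)) as [s Hs]. simpl. auto. }
  assert (Hmono : forall y1 y2, G T < y1 -> y1 <= y2 -> phi y1 <= phi y2).
  { intros y1 y2 H1 H2. destruct (Hphi y1 H1) as [R1 E1]. destruct (Hphi y2 ltac:(lra)) as [R2 E2].
    destruct (Rle_lt_dec (phi y1) (phi y2)) as [L|L]; [exact L|].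
    pose proof (Hincr _ _ L ltac:(lra)). lra. }
  assert (Hsmono : forall y1 y2, G T < y1 -> y1 < y2 -> phi y1 < phi y2).
  { intros y1 y2 H1 H2. destruct (Hphi y1 H1) as [R1 E1]. destruct (Hphi y2 ltac:(lra)) as [R2 E2].
    destruct (Rle_lt_dec (phi y2) (phi y1)) as [L|L]; [|exact L].
    destruct L as [L|L].
    - pose proof (Hincr _ _ L ltac:(lra)). lra.
    - rewrite L in E2. lra. }
  exists phi. split; [|split].
  - destruct (Hphi 0 HGT) as [R0 E0].
    destruct (Rtotal_order (phi 0) s0) as [L|[L|L]]; [|exact L|].
    + pose proof (Hincr _ _ L Hs0). lra.
    + pose proof (Hincr _ _ L ltac:(lra)). lra.
  - intros x Hx.
    set (lb := (G T + x) / 2). set (ub := x + 1).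
    assert (Hlb : G T < lb) by (unfold lb; lra).
    assert (Hrg : forall y, lb <= y -> T <= phi y < 0 /\ G (phi y) = y) by (intros; apply Hphi; lra).
    assert (Prf : forall a, phi lb <= a <= phi ub -> derivable_pt G a).
    { intros a Ha. exists (g a). apply is_derive_Reals. apply Hder.
      destruct (Hrg ub ltac:(unfold ub, lb; lra)). lra. }
    assert (Hlu : phi lb < phi ub) by (apply Hsmono; unfold ub, lb in *; lra).
    assert (Prg : continuity_pt phi x).
    { destruct (Hrg lb ltac:(lra)) as [Rl El]. destruct (Hrg ub ltac:(unfold ub, lb; lra)) as [Ru Eu].
      apply (continuity_pt_recip_interv G phi (phi lb) (phi ub) Hlu).
      - intros a b Ha Hab Hb. apply Hincr; lra.
      - intros z Hz1 Hz2. rewrite El in Hz1. unfold comp, id. apply Hrg; lra.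
      - intros z Hz1 Hz2. rewrite El in Hz1. rewrite Eu in Hz2. split; apply Hmono; lra.
      - intros a Ha. apply Hcont; lra.
      - rewrite El, Eu. unfold lb, ub; lra. }
    assert (Prg_incr : phi lb <= phi x <= phi ub) by (split; apply Hmono; unfold lb, ub in *; lra).
    assert (Hcomp : forall y, lb <= y <= ub -> comp G phi y = id y) by (intros y Hy; unfold comp, id; apply Hrg; lra).
    destruct (Hrg x ltac:(unfold lb; lra)) as [Rx Ex].
    assert (Hd : derive_pt G (phi x) (Prf (phi x) Prg_incr) = g (phi x)).
    { apply derive_pt_eq_0. apply is_derive_Reals. apply Hder. lra. }
    assert (Hgp : 0 < g (phi x)) by (apply Rinv_0_lt_compat, Hhpos; lra).
    pose proof (derivable_pt_lim_recip_interv G phi lb ub x Prf Prg ltac:(unfold lb, ub; lra)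
                  ltac:(unfold lb, ub; lra) Prg_incr Hcomp ltac:(rewrite Hd; lra)) as HH.
    rewrite Hd in HH. apply is_derive_Reals in HH.
    eapply is_derive_eq; [exact HH|]. change (@eq R (1 / / h (phi x)) (h (phi x))). field.
    pose proof (Hhpos (phi x) ltac:(lra)). lra.
  - intros x Hx. destruct (Hphi x ltac:(lra)) as [Rx Ex]. split; [|lra].
    destruct (Rle_lt_dec s0 (phi x)) as [L|L]; [exact L|].
    pose proof (Hincr _ _ L Hs0). lra.
Qed.

Lemma dmult (f g : R -> R) x df dg : is_derive f x df -> is_derive g x dg ->
  is_derive (fun t => f t * g t) x (df * g x + f x * dg).
Proof. intros H1 H2. exact (is_derive_mult (K:=R_AbsRing) f g x df dg H1 H2 Rmult_comm). Qed.

Lemma dcomp (f g : R -> R) x df dg : is_derive f (g x) df -> is_derive g x dg ->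
  is_derive (fun t => f (g t)) x (dg * df).
Proof. intros H1 H2. exact (is_derive_comp (K:=R_AbsRing) f g x df dg H1 H2). Qed.

Lemma dopp (f : R -> R) x df : is_derive f x df -> is_derive (fun t => - f t) x (- df).
Proof. intros H. exact (is_derive_opp (K:=R_AbsRing) f x df H). Qed.

Lemma dminus (f g : R -> R) x df dg : is_derive f x df -> is_derive g x dg ->
  is_derive (fun t => f t - g t) x (df - dg).
Proof. intros H1 H2. exact (is_derive_minus (K:=R_AbsRing) f g x df dg H1 H2). Qed.

Lemma deriv_cont (f : R -> R) x l : is_derive f x l -> continuity_pt f x.
Proof. intros H. apply continuity_pt_filterlim. apply (ex_derive_continuous f). exists l; exact H. Qed.

Lemma neg_bound al be c s0 (phi : R -> R) : 0 < al -> 0 <= be -> 0 < c -> phi 0 = s0 ->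
  (forall x, 0 <= x -> is_derive phi x (hf al be c (phi x))) ->
  (forall x, 0 <= x -> s0 <= phi x < 0) ->
  forall x, 0 <= x -> Rabs (phi x) <= Rabs s0 * exp (- (c * al) * x).
Proof.
  intros Hal Hbe Hc H0 Hd Hr x Hx.
  set (k := c * al).
  set (D := fun y => phi y * exp (k * y)).
  set (dD := fun y => hf al be c (phi y) * exp (k * y) + phi y * (k * exp (k * y))).
  assert (HD : forall y, 0 <= y -> is_derive D y (dD y)).
  { intros y Hy. unfold D, dD. apply (dmult phi (fun t => exp (k * t))); [apply Hd; exact Hy|].
    apply (dcomp exp (fun y => k * y) y (exp (k * y)) k).
    - exact (is_derive_exp (k * y)).
    - apply is_derive_eq with (k * 1). apply (is_derive_scal (fun y => y)). apply (is_derive_id (K:=R_AbsRing)). apply Rmult_1_r. }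
  destruct (MVT_gen D 0 x dD) as [xi [Hxi Heq]].
  - intros z Hz. rewrite Rmin_left, Rmax_right in Hz by lra. apply HD; lra.
  - intros z Hz. rewrite Rmin_left, Rmax_right in Hz by lra. apply (deriv_cont D z (dD z)). apply HD; lra.
  - rewrite Rmin_left, Rmax_right in Hxi by lra.
    assert (Hp : 0 <= dD xi).
    { unfold dD. destruct (Hr xi ltac:(lra)).
      pose proof (hf_lower al be c (phi xi) Hal Hbe Hc ltac:(lra)).
      pose proof (exp_pos (k * xi)). unfold k in *. nra. }
    assert (HDx : D 0 <= D x) by nra.
    unfold D in HDx. rewrite H0, Rmult_0_r, exp_0, Rmult_1_r in HDx.
    destruct (Hr x Hx).
    rewrite Rabs_left by lra. rewrite Rabs_left by lra.
    assert (E : exp (k * x) * exp (- k * x) = 1) by (rewrite <- exp_plus; replace (k * x + - k * x) with 0 by ring; apply exp_0).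
    pose proof (exp_pos (- k * x)).
    replace (- (c * al) * x) with (- k * x) by (unfold k; ring).
    nra.
Qed.

Lemma ode_any al be c s0 : 0 < al -> 0 < be -> 0 < c ->
  exists (phi : R -> R) (k : R), 0 < k /\ phi 0 = s0 /\
    (forall x, 0 <= x -> is_derive phi x (hf al be c (phi x))) /\
    (forall x, 0 <= x -> Rabs (phi x) <= Rabs s0 * exp (- k * x)).
Proof.
  intros Hal Hbe Hc.
  destruct (Rtotal_order s0 0) as [Hs|[Hs|Hs]].
  - destruct (ode_neg al be c s0 Hal ltac:(lra) Hc Hs) as [phi [H0 [Hd Hr]]].
    exists phi, (c * al). split; [nra|]. split; [exact H0|]. split; [exact Hd|].
    apply (neg_bound al be c s0 phi); auto; lra.
  - exists (fun _ => 0), 1. split; [lra|]. split; [auto|]. split.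
    + intros x _. apply is_derive_eq with 0. apply (is_derive_const (K:=R_AbsRing) (V:=R_NormedModule) 0).
      change (@eq R 0 (hf al be c 0)). unfold hf. rewrite !Rmult_0_r, exp_0. ring.
    + intros x _. rewrite Hs, Rabs_R0. pose proof (exp_pos (- 1 * x)). nra.
  - destruct (ode_neg be al c (- s0) Hbe ltac:(lra) Hc ltac:(lra)) as [psi [H0 [Hd Hr]]].
    exists (fun x => - psi x), (c * be). split; [nra|]. split; [rewrite H0; ring|]. split.
    + intros x Hx. apply is_derive_eq with (- hf be al c (psi x)). apply dopp. apply Hd; exact Hx.
      change (@eq R (- hf be al c (psi x)) (hf al be c (- psi x))). unfold hf. replace (- al * - psi x) with (al * psi x) by ring.
      replace (al * - psi x) with (- al * psi x) by ring.
      replace (be * - psi x) with (- be * psi x) by ring. ring.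
    + intros x Hx. rewrite Rabs_Ropp.
      pose proof (neg_bound be al c (- s0) psi Hbe ltac:(lra) Hc H0 Hd Hr x Hx).
      rewrite Rabs_Ropp in H. exact H.
Qed.

Lemma exp_m1 y : Rabs (exp y - 1) <= Rabs y * exp (Rabs y).
Proof.
  destruct (Rle_lt_dec 0 y) as [H|H].
  - rewrite (Rabs_pos_eq y H).
    pose proof (exp_ineq1_le y). pose proof (exp_ineq1_le (- y)).
    assert (E2 : exp (- y) * exp y = 1) by (rewrite <- exp_plus; replace (- y + y) with 0 by ring; apply exp_0).
    pose proof (exp_pos y).
    rewrite Rabs_pos_eq by lra. nra.
  - rewrite (Rabs_left y H).
    pose proof (exp_ineq1_le y). pose proof (exp_ineq1_le (- y)).
    assert (exp y < 1) by (rewrite <- exp_0; apply exp_increasing; lra).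
    rewrite Rabs_left by lra. nra.
Qed.

Lemma exp_lin_bound a p B : 0 <= a -> Rabs p <= B -> Rabs (exp (a * p) - 1) <= a * Rabs p * exp (a * B).
Proof.
  intros Ha Hp. apply Rle_trans with (1 := exp_m1 (a * p)).
  rewrite Rabs_mult, (Rabs_pos_eq a Ha).
  apply Rmult_le_compat_l. pose proof (Rabs_pos p); nra.
  destruct (Req_dec (a * Rabs p) (a * B)) as [E|E]; [rewrite E; lra|].
  left; apply exp_increasing. pose proof (Rabs_pos p). nra.
Qed.

Lemma Rpower_exp p a : Rpower (exp p) a = exp (a * p).
Proof. unfold Rpower. rewrite ln_exp. reflexivity. Qed.

Lemma exp_mul_eq a b d : a + b = d -> exp a * exp b = exp d.
Proof. intros <-. rewrite exp_plus. reflexivity. Qed.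

Theorem proposition4p2 (n : nat) (hn : (3 <= n)%nat) (u0 : R) (hu0 : 0 < u0) :
  let q := 2 * INR n / (INR n - 2) in
  exists U U' : R -> R,
    (forall x, 0 <= x -> 0 < U x) /\
    (forall x, 0 <= x -> is_derive U x (U' x)) /\
    (forall x, 0 <= x ->
       is_derive U' x (- (Rpower (U x) (- q - 1) - Rpower (U x) (q - 1)))) /\
    U 0 = u0 /\
    is_lim U p_infty 1 /\
    rapid_conv U 1 /\
    (forall x, 0 <= x ->
       U' x = sqrt (2 / q) * (Rpower (U x) (- q / 2) - Rpower (U x) (q / 2))) /\
    is_lim U' p_infty 0 /\
    rapid_conv U' 0.
Proof.
  intros q.
  assert (Hn : 3 <= INR n) by (replace 3 with (INR 3) by (simpl; ring); apply le_INR; exact hn).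
  assert (Hq' : q = 2 + 4 / (INR n - 2)) by (unfold q; field; lra).
  assert (Hq : 2 < q) by (rewrite Hq'; assert (0 < 4 / (INR n - 2)) by (apply Rdiv_lt_0_compat; lra); lra).
  clearbody q.
  set (c := sqrt (2 / q)).
  assert (H2q : 0 < 2 / q) by (apply Rdiv_lt_0_compat; lra).
  assert (Hc : 0 < c) by (apply sqrt_lt_R0; exact H2q).
  assert (Hcc : c * c = 2 / q) by (apply sqrt_sqrt; lra).
  set (al := q / 2 + 1). set (be := q / 2 - 1).
  destruct (ode_any al be c (ln u0) ltac:(unfold al; lra) ltac:(unfold be; lra) Hc)
    as [phi [k [Hk [H0 [Hd Hb]]]]].
  set (s0 := ln u0) in *.
  set (U := fun x => exp (phi x)).
  set (U' := fun x => c * (Rpower (U x) (- q / 2) - Rpower (U x) (q / 2))).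
  assert (HU' : forall x, U' x = c * (exp (- q / 2 * phi x) - exp (q / 2 * phi x))).
  { intros x. unfold U', U. rewrite !Rpower_exp. reflexivity. }
  assert (Hphi_le : forall x, 0 <= x -> Rabs (phi x) <= Rabs s0).
  { intros x Hx. apply Rle_trans with (1 := Hb x Hx).
    assert (exp (- k * x) <= 1).
    { rewrite <- exp_0. destruct (Req_dec (- k * x) 0) as [E|E]; [rewrite E; lra|].
      left; apply exp_increasing. nra. }
    pose proof (Rabs_pos s0). nra. }
  exists U, U'.
  split; [|split; [|split; [|split; [|split; [|split; [|split; [|split]]]]]]].
  - intros x _. apply exp_pos.
  - intros x Hx. apply is_derive_eq with (hf al be c (phi x) * exp (phi x)).
    + apply (dcomp exp phi x (exp (phi x)) (hf al be c (phi x))). apply is_derive_exp. apply Hd; exact Hx.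
    + change (@eq R (hf al be c (phi x) * exp (phi x)) (U' x)). rewrite HU'. unfold hf.
      rewrite Rmult_assoc, Rmult_minus_distr_r.
      rewrite (exp_mul_eq (- al * phi x) (phi x) (- q / 2 * phi x)) by (unfold al; field).
      rewrite (exp_mul_eq (be * phi x) (phi x) (q / 2 * phi x)) by (unfold be; field).
      reflexivity.
  - intros x Hx.
    apply (is_derive_ext (fun t => c * (exp (- q / 2 * phi t) - exp (q / 2 * phi t)))).
    { intros t. rewrite HU'. reflexivity. }
    set (p := phi x). set (hv := hf al be c p).
    apply is_derive_eq with (c * ((- q / 2 * hv) * exp (- q / 2 * p) - (q / 2 * hv) * exp (q / 2 * p))).
    + apply is_derive_scal. apply dminus.
      * apply (dcomp exp (fun t => - q / 2 * phi t) x (exp (- q / 2 * p)) (- q / 2 * hv)).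
        apply is_derive_exp. apply is_derive_scal. apply Hd; exact Hx.
      * apply (dcomp exp (fun t => q / 2 * phi t) x (exp (q / 2 * p)) (q / 2 * hv)).
        apply is_derive_exp. apply is_derive_scal. apply Hd; exact Hx.
    + change (@eq R (c * ((- q / 2 * hv) * exp (- q / 2 * p) - (q / 2 * hv) * exp (q / 2 * p)))
                (- (Rpower (U x) (- q - 1) - Rpower (U x) (q - 1)))).
      unfold U. fold p. rewrite !Rpower_exp. unfold hv, hf.
      assert (E1 : exp (- q / 2 * p) * exp (- al * p) = exp ((- q - 1) * p)) by (apply exp_mul_eq; unfold al; field).
      assert (E2 : exp (- q / 2 * p) * exp (be * p) = exp (- p)) by (apply exp_mul_eq; unfold be; field).
      assert (E3 : exp (q / 2 * p) * exp (- al * p) = exp (- p)) by (apply exp_mul_eq; unfold al; field).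
      assert (E4 : exp (q / 2 * p) * exp (be * p) = exp ((q - 1) * p)) by (apply exp_mul_eq; unfold be; field).
      transitivity (- (c * c * q / 2) * (exp (- q / 2 * p) * exp (- al * p) - exp (- q / 2 * p) * exp (be * p)
                     + exp (q / 2 * p) * exp (- al * p) - exp (q / 2 * p) * exp (be * p))). { clear. cbv zeta. unfold Rdiv. ring. }
      rewrite E1, E2, E3, E4, Hcc. field. lra.
  - cbv beta. unfold U. rewrite H0. unfold s0. apply exp_ln. exact hu0.
  - apply (exp_decay_lim U 1 (Rabs s0 * exp (Rabs s0)) k Hk).
    intros x Hx. unfold U.
    apply Rle_trans with (1 := exp_m1 (phi x)).
    pose proof (Hb x Hx). pose proof (Hphi_le x Hx).
    assert (exp (Rabs (phi x)) <= exp (Rabs s0)).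
    { destruct (Req_dec (Rabs (phi x)) (Rabs s0)) as [E|E]; [rewrite E; lra|]. left; apply exp_increasing; lra. }
    pose proof (exp_pos (Rabs (phi x))). pose proof (exp_pos (- k * x)). pose proof (Rabs_pos (phi x)).
    nra.
  - apply (exp_decay_lim U 1 (Rabs s0 * exp (Rabs s0)) k Hk).
    intros x Hx. unfold U.
    apply Rle_trans with (1 := exp_m1 (phi x)).
    pose proof (Hb x Hx). pose proof (Hphi_le x Hx).
    assert (exp (Rabs (phi x)) <= exp (Rabs s0)).
    { destruct (Req_dec (Rabs (phi x)) (Rabs s0)) as [E|E]; [rewrite E; lra|]. left; apply exp_increasing; lra. }
    pose proof (exp_pos (Rabs (phi x))). pose proof (exp_pos (- k * x)). pose proof (Rabs_pos (phi x)).
    nra.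
  - intros x _. reflexivity.
  - apply (exp_decay_lim U' 0 (c * (2 * (q / 2) * Rabs s0 * exp (q / 2 * Rabs s0))) k Hk).
    intros x Hx. rewrite HU', Rminus_0_r.
    pose proof (exp_lin_bound (q / 2) (- phi x) (Rabs s0) ltac:(lra) ltac:(rewrite Rabs_Ropp; apply Hphi_le; exact Hx)) as B1.
    pose proof (exp_lin_bound (q / 2) (phi x) (Rabs s0) ltac:(lra) ltac:(apply Hphi_le; exact Hx)) as B2.
    replace (q / 2 * - phi x) with (- q / 2 * phi x) in B1 by field.
    rewrite Rabs_Ropp in B1.
    rewrite Rabs_mult, (Rabs_pos_eq c) by lra.
    assert (T : Rabs (exp (- q / 2 * phi x) - exp (q / 2 * phi x)) <=
                Rabs (exp (- q / 2 * phi x) - 1) + Rabs (exp (q / 2 * phi x) - 1)).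
    { replace (exp (- q / 2 * phi x) - exp (q / 2 * phi x)) with
        ((exp (- q / 2 * phi x) - 1) - (exp (q / 2 * phi x) - 1)) by ring.
      apply Rabs_triang_inv2 || (unfold Rminus; eapply Rle_trans; [apply Rabs_triang|]; rewrite Rabs_Ropp; lra). }
    pose proof (Hb x Hx).
    pose proof (exp_pos (q / 2 * Rabs s0)).
    assert (0 <= q / 2 * exp (q / 2 * Rabs s0)) by nra.
    assert (Rabs (exp (- q / 2 * phi x) - exp (q / 2 * phi x)) <= 2 * (q / 2) * exp (q / 2 * Rabs s0) * (Rabs s0 * exp (- k * x))) by nra.
    nra.
  - apply (exp_decay_lim U' 0 (c * (2 * (q / 2) * Rabs s0 * exp (q / 2 * Rabs s0))) k Hk).
    intros x Hx. rewrite HU', Rminus_0_r.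
    pose proof (exp_lin_bound (q / 2) (- phi x) (Rabs s0) ltac:(lra) ltac:(rewrite Rabs_Ropp; apply Hphi_le; exact Hx)) as B1.
    pose proof (exp_lin_bound (q / 2) (phi x) (Rabs s0) ltac:(lra) ltac:(apply Hphi_le; exact Hx)) as B2.
    replace (q / 2 * - phi x) with (- q / 2 * phi x) in B1 by field.
    rewrite Rabs_Ropp in B1.
    rewrite Rabs_mult, (Rabs_pos_eq c) by lra.
    assert (T : Rabs (exp (- q / 2 * phi x) - exp (q / 2 * phi x)) <=
                Rabs (exp (- q / 2 * phi x) - 1) + Rabs (exp (q / 2 * phi x) - 1)).
    { replace (exp (- q / 2 * phi x) - exp (q / 2 * phi x)) with
        ((exp (- q / 2 * phi x) - 1) - (exp (q / 2 * phi x) - 1)) by ring.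
      apply Rabs_triang_inv2 || (unfold Rminus; eapply Rle_trans; [apply Rabs_triang|]; rewrite Rabs_Ropp; lra). }
    pose proof (Hb x Hx).
    pose proof (exp_pos (q / 2 * Rabs s0)).
    assert (0 <= q / 2 * exp (q / 2 * Rabs s0)) by nra.
    assert (Rabs (exp (- q / 2 * phi x) - exp (q / 2 * phi x)) <= 2 * (q / 2) * exp (q / 2 * Rabs s0) * (Rabs s0 * exp (- k * x))) by nra.
    nra.
Qed.
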